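(* Let $G$ be a $4$-Sachs minimal graph in $\mathfrak{G}_{n,m}$ and let $\mathbf{B}_G$ be a spanning subgraph of $G$ which is a difference graph with bipartition $(U,W)$. Let $\overline{\mathbf{B}_G}$ be the graph obtained from $G$ by deleting all edges of $\mathbf{B}_G$ and then deleting all isolated vertices. If $V(\overline{\mathbf{B}_G})\subseteq U$, then $$\mathbf{a}_4(G)=\mathbf{a}_4(\mathbf{B}_G)+\mathbf{a}_4(\overline{\mathbf{B}_G})+\sum_{e_i\in E(\overline{\mathbf{B}_G})}\epsilon(\mathbf{B}_G\setminus V(e_i))-2\sum_{\{e_p,e_q\}}n_W(e_p,e_q),$$ where the first sum is over all edges $e_i$ of $\overline{\mathbf{B}_G}$ and the second over all pairs of distinct adjacent edges $e_p,e_q$ of $\overline{\mathbf{B}_G}$.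
   Context: $\mathfrak{G}_{n,m}$ is the set of connected simple graphs with $n$ vertices and $m$ edges. $\mathbf{a}_4(G)$ is the coefficient of $\lambda^{\nu(G)-4}$ in $\det(\lambda\mathbf{I}-\mathbf{A}(G))$ (equivalently, number of 2-matchings minus twice the number of 4-cycles). $G\in\mathfrak{G}_{n,m}$ is $4$-Sachs minimal if $\mathbf{a}_4(G)=\min\{\mathbf{a}_4(H):H\in\mathfrak{G}_{n,m}\}$. A difference graph is a bipartite graph in which the neighborhoods of the vertices of one part are linearly ordered by inclusion. $\epsilon(H)$ is the number of edges of $H$; $V(e)$ is the set of endpoints of an edge $e$; $\mathbf{B}_G\setminus V(e_i)$ is obtained by deleting these two vertices and incident edges. For adjacent edges $e_p=xx_p$, $e_q=xx_q$ of $\overline{\mathbf{B}_G}$, $n_W(e_p,e_q)=|\{w\in W: wx_p\in E(G),\ wx_q\in E(G)\}|$. *)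

(* Defs.v *)
(* Simple graphs on a finite vertex type T, given by their
   edge set: a set of 2-element subsets of T. *)
From mathcomp Require Import all_boot all_order all_algebra.
Set Implicit Arguments. Unset Strict Implicit. Unset Printing Implicit Defensive.
Import Order.TTheory GRing.Theory Num.Theory.

Section Graphs.
Variable T : finType.
Implicit Types (E : {set {set T}}) (U W : {set T}).

Definition simple_graph E : Prop := forall e, e \in E -> #|e| = 2.

Definition adjrel E : rel T := fun x y => [set x; y] \in E.

Definition connected_graph E : Prop := forall x y : T, connect (adjrel E) x y.

Definition num_2matchings E : nat :=
  #|[set P : {set {set T}} | (P \subset E) &&
      [exists e1, exists e2, (P == [set e1; e2]) && (e1 != e2) && [disjoint e1 & e2]]]|.

(* number of 4-cycles (as subgraphs: edge sets of 4-cycles) *)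
Definition is_4cycle (C : {set {set T}}) : bool :=
  [exists a : T, exists b : T, exists c : T, exists d : T,
     uniq [:: a; b; c; d] &&
     (C == [set [set a; b]; [set b; c]; [set c; d]; [set d; a]])].

Definition num_4cycles E : nat :=
  #|[set C : {set {set T}} | (C \subset E) && is_4cycle C]|.

Definition a4 E : int := ((num_2matchings E)%:Z - 2 * (num_4cycles E)%:Z)%R.

(* 4-Sachs minimal in G_{n,m}: n = #|T|, m = #|E| *)
Definition sachs4_minimal E : Prop :=
  forall E' : {set {set T}}, simple_graph E' -> connected_graph E' ->
    #|E'| = #|E| -> (a4 E <= a4 E')%R.

Definition nbhd E (x : T) : {set T} := [set y | [set x; y] \in E].

Definition nested_on E (X : {set T}) : Prop :=
  forall x1 x2, x1 \in X -> x2 \in X ->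
    (nbhd E x1 \subset nbhd E x2) \/ (nbhd E x2 \subset nbhd E x1).

Definition difference_graph E U W : Prop :=
  [/\ [disjoint U & W], U :|: W = [set: T],
      (forall e, e \in E -> #|e :&: U| = 1 /\ #|e :&: W| = 1)
    & nested_on E U \/ nested_on E W].

(* vertex set of the graph with edge set E after deleting isolated vertices *)
Definition vertices E : {set T} := cover E.

Definition eps_del E (e : {set T}) : nat := #|[set f in E | [disjoint f & e]]|.

Definition adjacent_edges (e1 e2 : {set T}) : bool :=
  (e1 != e2) && ~~ [disjoint e1 & e2].

(* n_W(e_p, e_q) for adjacent edges e_p = x x_p, e_q = x x_q in G (edge set E):
   x_p is the endpoint of e_p not in e_q, x_q that of e_q not in e_p *)
Definition nW E W (ep eq : {set T}) : nat :=
  #|[set w in W | [forall xp in ep :\: eq, [set w; xp] \in E] &&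
                  [forall xq in eq :\: ep, [set w; xq] \in E]]|.

End Graphs.

(* Main.v *)
Require Import Defs.
From mathcomp Require Import all_boot all_order all_algebra.
From mathcomp Require Import ring.
Import Order.TTheory GRing.Theory Num.Theory.
Set Implicit Arguments. Unset Strict Implicit. Unset Printing Implicit Defensive.

Lemma cnt_split (T : finType) (pr : pred {set {set T}}) (E B : {set {set T}}) :
  B \subset E -> (forall P, pr P -> P != set0) ->
  #|[set P : {set {set T}} | (P \subset E) && pr P]| =
  #|[set P : {set {set T}} | (P \subset B) && pr P]| + #|[set P : {set {set T}} | (P \subset E :\: B) && pr P]|
  + #|[set P : {set {set T}} | [&& P \subset E, pr P, ~~ (P \subset B) & ~~ (P \subset E :\: B)]]|.
Proof.
move=> sBE ne.
rewrite -(cardsID [set P : {set {set T}} | P \subset B]) -(cardsID [set P : {set {set T}} | P \subset E :\: B] (_ :\: _)) addnA.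
congr (_ + _ + _); apply eq_card => P; rewrite !inE.
- case sPB: (P \subset B); rewrite /= ?andbF // (subset_trans sPB sBE) andbT //.
- case sPC: (P \subset E :\: B); rewrite /= ?andbT ?andbF //.
  have sPE : P \subset E by apply: (subset_trans sPC); apply: subsetDl.
  rewrite sPE /= ?andbT; case prP: (pr P); rewrite ?andbF ?andbT //=.
  apply/negP => sPB.
  have /set0Pn [x xP] := ne _ prP.
  have xB := subsetP sPB x xP. have := subsetP sPC x xP.
  by rewrite inE xB.
- by case: (P \subset E); case: (pr P); case: (P \subset B); case: (P \subset E :\: B).
Qed.

Definition m2p (T : finType) (P : {set {set T}}) : bool :=
  [exists e1, exists e2, (P == [set e1; e2]) && (e1 != e2) && [disjoint e1 & e2]].

Lemma eps_sum (T : finType) (E B : {set {set T}}) :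
  \sum_(e in E :\: B) eps_del B e =
  #|[set p : {set T} * {set T} | (p.1 \in E :\: B) && ((p.2 \in B) && [disjoint p.2 & p.1])]|.
Proof.
transitivity (\sum_(e in E :\: B) \sum_(f | (f \in B) && [disjoint f & e]) 1).
  apply eq_bigr => e _; rewrite /eps_del -sum1_card; apply eq_bigl => f; by rewrite inE.
by rewrite pair_big_dep sum1dep_card.
Qed.

Lemma m2_split (T : finType) (E B : {set {set T}}) : B \subset E ->
  num_2matchings E = num_2matchings B + num_2matchings (E :\: B) + \sum_(e in E :\: B) eps_del B e.
Proof.
move=> sBE.
rewrite /num_2matchings -!/(m2p _) (@cnt_split T (@m2p T) E B sBE); last first.
  move=> P /existsP [e1 /existsP [e2 /andP [/andP [/eqP -> _] _]]].
  by apply/set0Pn; exists e1; rewrite set21.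
congr (_ + _); rewrite eps_sum.
set D := [set p : {set T} * {set T} | _].
have -> : [set P : {set {set T}} | [&& P \subset E, m2p P, ~~ (P \subset B) & ~~ (P \subset E :\: B)]]
   = [set [set p.1; p.2] | p in D].
  apply/setP => P; rewrite inE; apply/idP/imsetP.
  - case/and4P => sPE /existsP [e1 /existsP [e2 /andP [/andP [/eqP dP ne12] dis]]] nB nC.
    have e1E : e1 \in E by apply: (subsetP sPE); rewrite dP set21.
    have e2E : e2 \in E by apply: (subsetP sPE); rewrite dP set22.
    case e1B : (e1 \in B).
    + have e2B : e2 \notin B.
        apply/negP => e2B; case/negP: nB; apply/subsetP => x; rewrite dP !inE.
        by case/orP => /eqP ->.
      exists (e2, e1); last by rewrite dP setUC.
      by rewrite /D !inE /= e2B e2E e1B dis.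
    + have e2B : e2 \in B.
        apply/negPn/negP => e2B; case/negP: nC; apply/subsetP => x; rewrite dP !inE.
        by case/orP => /eqP ->; rewrite ?e1B ?e2B.
      exists (e1, e2) => //.
      by rewrite /D !inE /= e2B e1E e1B disjoint_sym.
  - case=> [[e f]]; rewrite /D !inE /= => /and3P [/andP [eB eE] fB dis] ->.
    have fE : f \in E := subsetP sBE f fB.
    apply/and4P; split.
    + by apply/subsetP => x; rewrite !inE; case/orP => /eqP ->.
    + apply/existsP; exists e; apply/existsP; exists f; rewrite eqxx /= disjoint_sym dis andbT.
      by apply/eqP => ef; rewrite ef fB in eB.
    + by apply/negP => /subsetP /(_ e); rewrite set21 (negbTE eB) => /(_ isT).
    + by apply/negP => /subsetP /(_ f); rewrite set22 inE fB => /(_ isT).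
apply: card_in_imset => [[a b]] [c d]; rewrite /D !inE /=.
move=> /and3P [/andP [aB _] bB _] /and3P [/andP [cB _] dB _] eq.
have : a \in [set c; d] by rewrite -eq set21.
rewrite !inE => /orP [/eqP ac | /eqP ad]; last by rewrite ad dB in aB.
have : b \in [set c; d] by rewrite -eq set22.
rewrite !inE => /orP [/eqP bc | /eqP bd]; last by rewrite ac bd.
by rewrite bc (negbTE cB) in bB.
Qed.
Lemma card2_pick (T : finType) (e : {set T}) x : #|e| = 2 -> x \in e ->
  exists y, y != x /\ e = [set x; y].
Proof.
move=> /eqP /cards2P [a [b [ab ->]]]; rewrite !inE => /orP [/eqP ->|/eqP ->].
- by exists b; split; rewrite // eq_sym.
- by exists a; split; rewrite // setUC.
Qed.

Lemma adj_decomp (T : finType) (ep eq : {set T}) : #|ep| = 2 -> #|eq| = 2 ->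
  adjacent_edges ep eq -> exists x y z, [/\ x != y, x != z, y != z,
    ep = [set x; y] & eq = [set x; z]].
Proof.
move=> c1 c2 /andP [ne nd].
have : ep :&: eq != set0 by rewrite setI_eq0.
case/set0Pn => x; rewrite inE => /andP [xp xq].
have [y [yx dp]] := card2_pick c1 xp.
have [z [zx dq]] := card2_pick c2 xq.
exists x, y, z; split => //; rewrite 1?eq_sym //.
by apply/eqP => yz; move: ne; rewrite dp dq yz eqxx.
Qed.

Lemma setD_pair (T : finType) (x y z : T) : x != y -> y != z ->
  [set x; y] :\: [set x; z] = [set y].
Proof.
move=> xy yz; apply/setP => v; rewrite !inE.
case: (v =P y) => [->|_]; first by rewrite (negbTE yz) eq_sym (negbTE xy).
by rewrite !orbF; case: (v == x); rewrite ?andbF.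
Qed.

Definition Trp (T : finType) (E B : {set {set T}}) (W : {set T}) (t : {set T} * {set T} * T) : bool :=
  (t.1.1 \in E :\: B) && ((t.1.2 \in E :\: B) &&
     ((enum_rank t.1.1 < enum_rank t.1.2)%N && adjacent_edges t.1.1 t.1.2))
  && ((t.2 \in W) && ([forall xp in t.1.1 :\: t.1.2, [set t.2; xp] \in E] &&
                      [forall xq in t.1.2 :\: t.1.1, [set t.2; xq] \in E])).

Lemma nW_sum (T : finType) (E B : {set {set T}}) (W : {set T}) :
  (\sum_(ep in E :\: B)
      \sum_(eq in E :\: B | (enum_rank ep < enum_rank eq)%N && adjacent_edges ep eq)
         nW E W ep eq)%N = #|[set t | Trp E B W t]|.
Proof.
rewrite pair_big_dep.
transitivity (\sum_(p | (p.1 \in E :\: B) && ((p.2 \in E :\: B) &&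
     ((enum_rank p.1 < enum_rank p.2)%N && adjacent_edges p.1 p.2)))
   \sum_(w | (w \in W) && ([forall xp in p.1 :\: p.2, [set w; xp] \in E] &&
                      [forall xq in p.2 :\: p.1, [set w; xq] \in E])) 1)%N.
  apply eq_bigr => p _; rewrite /nW -sum1_card; apply eq_bigl => w; by rewrite inE.
by rewrite pair_big_dep sum1dep_card.
Qed.

Lemma inC_U (T : finType) (E B : {set {set T}}) (U : {set T}) :
  cover (E :\: B) \subset U -> forall e v, e \in E :\: B -> v \in e -> v \in U.
Proof.
move=> hC e v eC ve; apply: (subsetP hC); apply/bigcupP; by exists e.
Qed.

Lemma edgeB (T : finType) (B : {set {set T}}) (U W : {set T}) :
  (forall v, (v \in W) = (v \notin U)) ->
  (forall e, e \in B -> #|e :&: U| = 1 /\ #|e :&: W| = 1) ->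
  forall x y, x != y -> [set x; y] \in B -> (x \in U) != (y \in U).
Proof.
move=> hW hB x y xy /hB [cU cW].
case xU: (x \in U); case yU: (y \in U) => //=.
- move: cU; rewrite (setIidPl _) ?cards2 ?xy //.
  by apply/subsetP => v; rewrite !inE => /orP [] /eqP ->.
- move: cW; rewrite (setIidPl _) ?cards2 ?xy //.
  by apply/subsetP => v; rewrite !inE => /orP [] /eqP ->; rewrite hW ?xU ?yU.
Qed.

Definition fcyc (T : finType) (t : {set T} * {set T} * T) : {set {set T}} :=
  [set t.1.1; t.1.2; [set t.2] :|: (t.1.1 :\: t.1.2); [set t.2] :|: (t.1.2 :\: t.1.1)].

Lemma Tr_form (T : finType) (E B : {set {set T}}) (U W : {set T}) t :
  (forall e, e \in E -> #|e| = 2) ->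
  (forall v, (v \in W) = (v \notin U)) ->
  cover (E :\: B) \subset U -> Trp E B W t ->
  exists x y z, [/\ [/\ x != y, x != z & y != z], [/\ x \in U, y \in U, z \in U & t.2 \notin U],
     [/\ t.1.1 = [set x; y], t.1.2 = [set x; z], [set t.2; y] \in E & [set t.2; z] \in E],
     [set x; y] \in E :\: B /\ [set x; z] \in E :\: B &
     fcyc t = [set [set x; y]; [set x; z]; [set t.2; y]; [set t.2; z]]].
Proof.
move=> simp hW hC.
case: t => [[ep eq] w]; rewrite /Trp /= => /andP [/and3P [epC eqC /andP [_ adj]] /and3P [wW fa1 fa2]].
have epE : ep \in E by move: epC; rewrite inE => /andP [].
have eqE : eq \in E by move: eqC; rewrite inE => /andP [].
have [x [y [z [xy xz yz dp dq]]]] := adj_decomp (simp _ epE) (simp _ eqE) adj.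
have dpq : ep :\: eq = [set y] by rewrite dp dq setD_pair.
have dqp : eq :\: ep = [set z] by rewrite dp dq setD_pair // eq_sym.
exists x, y, z; split => //.
- split.
  + by apply: (inC_U hC epC); rewrite dp !inE eqxx.
  + by apply: (inC_U hC epC); rewrite dp !inE eqxx orbT.
  + by apply: (inC_U hC eqC); rewrite dq !inE eqxx orbT.
  + by rewrite -hW.
- split => //.
  + by move/forallP: fa1 => /(_ y); rewrite dpq inE eqxx.
  + by move/forallP: fa2 => /(_ z); rewrite dqp inE eqxx.
- by rewrite -dp -dq.
- by rewrite /fcyc /= dpq dqp dp dq.
Qed.

Lemma set4_perm (T : finType) (a b c d : T) :
  [set a; b; c; d] = [set a; c; d; b].
Proof. by apply/setP => e; rewrite !inE; case: (e == a); case: (e == b); case: (e == c); case: (e == d). Qed.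

Lemma fcyc_in (T : finType) (E B : {set {set T}}) (U W : {set T}) t :
  (forall e, e \in E -> #|e| = 2) ->
  (forall v, (v \in W) = (v \notin U)) ->
  cover (E :\: B) \subset U -> Trp E B W t ->
  [&& fcyc t \subset E, is_4cycle (fcyc t), ~~ (fcyc t \subset B) & ~~ (fcyc t \subset E :\: B)].
Proof.
move=> simp hW hC Tt.
have [x [y [z [[xy xz yz] [xU yU zU wU] [d1 d2 wyE wzE] [xyC xzC] ->]]]] := Tr_form simp hW hC Tt.
set w := t.2 in wU wyE wzE *.
have xyE : [set x; y] \in E by move: xyC; rewrite inE => /andP [].
have xzE : [set x; z] \in E by move: xzC; rewrite inE => /andP [].
have xw : x != w by apply/eqP => e; rewrite -e xU in wU.
have yw : y != w by apply/eqP => e; rewrite -e yU in wU.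
have zw : z != w by apply/eqP => e; rewrite -e zU in wU.
apply/and4P; split.
- by rewrite !subUset !sub1set xyE xzE wyE wzE.
- apply/existsP; exists x; apply/existsP; exists y; apply/existsP; exists w;
  apply/existsP; exists z.
  rewrite /= !inE !negb_or xy xw xz yw yz eq_sym zw /=.
  have -> : [set y; w] = [set w; y] by rewrite setUC.
  have -> : [set z; x] = [set x; z] by rewrite setUC.
  by rewrite set4_perm.
- apply/negP => /subsetP /(_ [set x; y]); rewrite !inE eqxx /= => /(_ isT) xyB.
  by move: xyC; rewrite inE xyB.
- apply/negP => /subsetP /(_ [set w; y]) H.
  have wyC : [set w; y] \in E :\: B by apply: H; rewrite !inE eqxx !orbT.
  have := inC_U hC wyC (setU11 _ _); by rewrite (negbTE wU).
Qed.

Lemma set4P (T : finType) (a b c d e : T) :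
  e \in [set a; b; c; d] -> [\/ e = a, e = b, e = c | e = d].
Proof.
rewrite !inE => /orP [/orP [/orP [/eqP ->|/eqP ->]|/eqP ->]|/eqP ->].
- exact: Or41. - exact: Or42. - exact: Or43. - exact: Or44.
Qed.

Lemma set2P (T : finType) (a b e : T) : e \in [set a; b] -> e = a \/ e = b.
Proof. by rewrite !inE => /orP [/eqP ->|/eqP ->]; [left|right]. Qed.

Lemma fcyc_props (T : finType) (E B : {set {set T}}) (U W : {set T}) t :
  (forall e, e \in E -> #|e| = 2) ->
  (forall v, (v \in W) = (v \notin U)) ->
  cover (E :\: B) \subset U -> Trp E B W t ->
  [/\ (forall e, e \in fcyc t -> e \in E :\: B -> e = t.1.1 \/ e = t.1.2),
      t.1.1 \in fcyc t, t.1.2 \in fcyc t,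
      (exists2 e, e \in fcyc t & t.2 \in e) /\ t.2 \notin U &
      (forall e v, e \in fcyc t -> v \in e -> v \notin U -> v = t.2)].
Proof.
move=> simp hW hC Tt.
have [x [y [z [[xy xz yz] [xU yU zU wU] [d1 d2 wyE wzE] [xyC xzC] ->]]]] := Tr_form simp hW hC Tt.
rewrite d1 d2; split.
- move=> e /set4P [] -> eC; [by left | by right | | ];
    have := inC_U hC eC (setU11 _ _); by rewrite (negbTE wU).
- by rewrite !inE eqxx.
- by rewrite !inE eqxx orbT.
- by split=> //; exists [set t.2; y]; rewrite !inE eqxx ?orbT.
- move=> e v /set4P [] -> /set2P [] -> //; by rewrite ?xU ?yU ?zU.
Qed.

Lemma fcyc_inj (T : finType) (E B : {set {set T}}) (U W : {set T}) :
  (forall e, e \in E -> #|e| = 2) ->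
  (forall v, (v \in W) = (v \notin U)) ->
  cover (E :\: B) \subset U ->
  {in [set t | Trp E B W t] &, injective (@fcyc T)}.
Proof.
move=> simp hW hC [[a b] w] [[c d] w']; rewrite !inE => T1 T2 eqf.
have [P1 a1 b1 [[e1 e1f we1] wU] V1] := fcyc_props simp hW hC T1.
have [P2 c2 d2 [[e2 e2f we2] wU'] V2] := fcyc_props simp hW hC T2.
move: T1 T2 => /andP [/and3P [aC bC /andP [rab _]] _] /andP [/and3P [cC dC /andP [rcd _]] _].
rewrite /= in P1 a1 b1 e1f we1 V1 P2 c2 d2 e2f we2 V2 aC bC cC dC rab rcd wU wU'.
have hc : c = a \/ c = b by apply: P1 => //; rewrite eqf.
have hd : d = a \/ d = b by apply: P1 => //; rewrite eqf.
have [ca db] : c = a /\ d = b.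
  case: hc => ec; case: hd => ed; subst => //.
  - by rewrite ltnn in rcd.
  - by rewrite ltnNge (ltnW rab) in rcd.
  - by rewrite ltnn in rcd.
have ww : w' = w by apply: (V1 e2) => //; rewrite eqf.
by rewrite ca db ww.
Qed.

Ltac s4 := apply/setP => ?; rewrite !inE;
  repeat match goal with |- context [?e == ?x] => case: (e == x) end.

Lemma set4_p1 (T : finType) (p q r s : T) : [set p; q; r; s] = [set p; q; s; r].
Proof. s4. all: done. Qed.
Lemma set4_p2 (T : finType) (p q r s : T) : [set p; q; r; s] = [set q; p; s; r].
Proof. s4. all: done. Qed.
Lemma set4_p3 (T : finType) (p q r s : T) : [set p; q; r; s] = [set q; p; r; s].
Proof. s4. all: done. Qed.
Lemma set4_rot (T : finType) (p q r s : T) : [set p; q; r; s] = [set q; r; s; p].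
Proof. s4. all: done. Qed.

Lemma mk_tr (T : finType) (E B : {set {set T}}) (U W : {set T}) x y z w :
  (forall v, (v \in W) = (v \notin U)) ->
  x != y -> x != z -> y != z -> w \notin U ->
  [set x; y] \in E :\: B -> [set x; z] \in E :\: B ->
  [set w; y] \in E -> [set w; z] \in E ->
  (enum_rank [set x; y] < enum_rank [set x; z])%N ->
  Trp E B W ([set x; y], [set x; z], w) /\
  fcyc ([set x; y], [set x; z], w) = [set [set x; y]; [set x; z]; [set w; y]; [set w; z]].
Proof.
move=> hW xy xz yz wU xyC xzC wyE wzE r.
have zy : z != y by rewrite eq_sym.
rewrite /Trp /fcyc /= (setD_pair xy yz) (setD_pair xz zy); split => //.
rewrite xyC xzC r hW wU /=; apply/andP; split; last first.
  by apply/andP; split; apply/forallP => v; apply/implyP; rewrite inE => /eqP ->.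
apply/andP; split.
  apply/eqP => e; have : y \in [set x; z] by rewrite -e !inE eqxx orbT.
  by rewrite !inE (negbTE yz) eq_sym (negbTE xy).
by rewrite -setI_eq0; apply/set0Pn; exists x; rewrite !inE eqxx.
Qed.

Lemma finish (T : finType) (E B : {set {set T}}) (U W : {set T}) a b c d :
  (forall v, (v \in W) = (v \notin U)) ->
  a != b -> a != c -> b != c -> d \notin U ->
  [set a; b] \in E :\: B -> [set b; c] \in E :\: B ->
  [set c; d] \in E -> [set d; a] \in E ->
  exists2 t, Trp E B W t & fcyc t = [set [set a; b]; [set b; c]; [set c; d]; [set d; a]].
Proof.
move=> hW ab ac bc dU abC bcC cdE daE.
have eba : [set b; a] = [set a; b] by rewrite setUC.
have edc : [set d; c] = [set c; d] by rewrite setUC.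
have ne : [set b; a] != [set b; c].
  apply/eqP => e; have : a \in [set b; c] by rewrite -e !inE eqxx orbT.
  by rewrite !inE (negbTE ac) (negbTE ab).
case: (ltngtP (enum_rank [set b; a]) (enum_rank [set b; c])) => r.
- have [Tt ft] := mk_tr (B:=B) (E:=E) (x:=b) (y:=a) (z:=c) (w:=d) hW
    ltac:(by rewrite eq_sym) bc ac dU ltac:(by rewrite eba) bcC daE ltac:(by rewrite edc) r.
  by exists ([set b; a], [set b; c], d) => //; rewrite ft eba edc set4_p1.
- have [Tt ft] := mk_tr (B:=B) (E:=E) (x:=b) (y:=c) (z:=a) (w:=d) hW
    bc ltac:(by rewrite eq_sym) ltac:(by rewrite eq_sym) dU bcC ltac:(by rewrite eba) ltac:(by rewrite edc)
    daE r.
  by exists ([set b; c], [set b; a], d) => //; rewrite ft eba edc set4_p3.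
- by move/val_inj/enum_rank_inj: r => e; rewrite e eqxx in ne.
Qed.

Lemma edge_cls (T : finType) (E B : {set {set T}}) (U W : {set T}) x y :
  B \subset E ->
  (forall v, (v \in W) = (v \notin U)) ->
  (forall e, e \in B -> #|e :&: U| = 1 /\ #|e :&: W| = 1) ->
  cover (E :\: B) \subset U ->
  x != y -> [set x; y] \in E ->
  [/\ ([set x; y] \in B) = ((x \in U) != (y \in U)),
      ([set x; y] \in E :\: B) = ((x \in U) && (y \in U)) & (x \in U) || (y \in U)].
Proof.
move=> sBE hW hB hC xy xyE.
have eB := @edgeB T B U W hW hB x y xy.
have eC : [set x; y] \in E :\: B -> (x \in U) && (y \in U).
  move=> C; rewrite (inC_U hC C (setU11 _ _)); apply: (inC_U hC C); by rewrite !inE eqxx orbT.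
have iC : ([set x; y] \in E :\: B) = ([set x; y] \notin B) by rewrite inE xyE andbT.
case xU: (x \in U); case yU: (y \in U) => /=.
- by case xB: ([set x; y] \in B); [move: (eB xB); rewrite xU yU | rewrite iC xB].
- case xB: ([set x; y] \in B); first by rewrite iC xB.
  by move: (eC); rewrite iC xB xU yU => /(_ isT).
- case xB: ([set x; y] \in B); first by rewrite iC xB.
  by move: (eC); rewrite iC xB xU yU => /(_ isT).
- case xB: ([set x; y] \in B); first by move: (eB xB); rewrite xU yU.
  by move: (eC); rewrite iC xB xU yU => /(_ isT).
Qed.

Lemma rest_sub (T : finType) (E B : {set {set T}}) (U W : {set T}) (P : {set {set T}}) :
  B \subset E ->
  (forall v, (v \in W) = (v \notin U)) ->
  (forall e, e \in B -> #|e :&: U| = 1 /\ #|e :&: W| = 1) ->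
  cover (E :\: B) \subset U ->
  P \subset E -> is_4cycle P -> ~~ (P \subset B) -> ~~ (P \subset E :\: B) ->
  exists2 t, Trp E B W t & P = fcyc t.
Proof.
move=> sBE hW hB hC sPE.
case/existsP => a /existsP [b /existsP [c /existsP [d /andP [un /eqP dP]]]].
move: un; rewrite /= !inE !negb_or => /andP [/and3P [ab ac ad] /andP [/andP [bc bd] /andP [cd _]]].
subst P.
move: sPE; rewrite !subUset !sub1set => /andP [/andP [/andP [abE bcE] cdE] daE].
have da : d != a by rewrite eq_sym.
have db : d != b by rewrite eq_sym.
have ca : c != a by rewrite eq_sym.
have [Bab Cab Oab] := edge_cls sBE hW hB hC ab abE.
have [Bbc Cbc Obc] := edge_cls sBE hW hB hC bc bcE.
have [Bcd Ccd Ocd] := edge_cls sBE hW hB hC cd cdE.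
have [Bda Cda Oda] := edge_cls sBE hW hB hC da daE.
move=> nB nC; rewrite Bab Bbc Bcd Bda in nB; rewrite Cab Cbc Ccd Cda in nC.
move: Oab Obc Ocd Oda nB nC Cab Cbc Ccd Cda.
case aU: (a \in U); case bU: (b \in U); case cU: (c \in U); case dU: (d \in U) => //= _ _ _ _ _ _ Cab Cbc Ccd Cda.
- have [t Tt ft] := finish hW ab ac bc (negbT dU) Cab Cbc cdE daE.
  exists t => //; rewrite ft; s4; done.
- have [t Tt ft] := finish hW da db ab (negbT cU) Cda Cab bcE cdE.
  exists t => //; rewrite ft; s4; done.
- have [t Tt ft] := finish hW cd ca da (negbT bU) Ccd Cda abE bcE.
  exists t => //; rewrite ft; s4; done.
- have [t Tt ft] := finish hW bc bd cd (negbT aU) Cbc Ccd daE abE.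
  exists t => //; rewrite ft; s4; done.
Qed.

Lemma q4_split (T : finType) (E B : {set {set T}}) (U W : {set T}) :
  B \subset E ->
  (forall e, e \in E -> #|e| = 2) ->
  (forall v, (v \in W) = (v \notin U)) ->
  (forall e, e \in B -> #|e :&: U| = 1 /\ #|e :&: W| = 1) ->
  cover (E :\: B) \subset U ->
  num_4cycles E = num_4cycles B + num_4cycles (E :\: B) +
    (\sum_(ep in E :\: B)
      \sum_(eq in E :\: B | (enum_rank ep < enum_rank eq)%N && adjacent_edges ep eq)
         nW E W ep eq)%N.
Proof.
move=> sBE simp hW hB hC.
rewrite /num_4cycles (@cnt_split T (@is_4cycle T) E B sBE); last first.
  move=> P /existsP [a /existsP [b /existsP [c /existsP [d /andP [_ /eqP ->]]]]].
  by apply/set0Pn; exists [set a; b]; rewrite !inE eqxx.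
congr (_ + _); rewrite nW_sum.
have -> : [set P : {set {set T}} | [&& P \subset E, is_4cycle P, ~~ (P \subset B) & ~~ (P \subset E :\: B)]]
   = [set fcyc t | t in [set t | Trp E B W t]].
  apply/setP => P; rewrite inE; apply/idP/imsetP.
  - case/and4P => sPE c4 nB nC.
    have [t Tt ->] := rest_sub sBE hW hB hC sPE c4 nB nC.
    by exists t; rewrite ?inE.
  - case=> t; rewrite inE => Tt ->; exact: fcyc_in simp hW hC Tt.
exact: card_in_imset (fcyc_inj simp hW hC).
Qed.

Local Open Scope ring_scope.

Theorem theorem4p2 (T : finType) (E EB : {set {set T}}) (U W : {set T}) :
  simple_graph E -> connected_graph E -> sachs4_minimal E ->
  EB \subset E -> difference_graph EB U W ->
  vertices (E :\: EB) \subset U ->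
  a4 E = a4 EB + a4 (E :\: EB)
         + (\sum_(e in E :\: EB) eps_del EB e)%N%:Z
         - 2 * (\sum_(ep in E :\: EB)
                  \sum_(eq in E :\: EB | (enum_rank ep < enum_rank eq)%N
                                         && adjacent_edges ep eq)
                    nW E W ep eq)%N%:Z.
Proof.
move=> simp _ _ sBE [dUW cUW hB _] hC.
have hW : forall v, (v \in W) = (v \notin U).
  move=> v; case vU: (v \in U) => /=.
  - apply/negP => vW; move: dUW; rewrite -setI_eq0 => /eqP e.
    have : v \in U :&: W by rewrite inE vU vW.
    by rewrite e inE.
  - have : v \in U :|: W by rewrite cUW inE.
    by rewrite inE vU.
rewrite /a4 (m2_split sBE) (q4_split sBE simp hW hB hC).
rewrite !PoszD.
set m1 := (num_2matchings EB)%:Z. set m2 := (num_2matchings (E :\: EB))%:Z.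
set s1 := Posz (\sum_(e in _) _)%N. set s2 := Posz (\sum_(ep in _) _)%N.
set q1 := (num_4cycles EB)%:Z. set q2 := (num_4cycles (E :\: EB))%:Z.
ring.
Qed.
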